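(* Let $d_R\ge2$. (a) If the glue code is compatible with the memory via $S,T$ and finely devised for $\Sigma$, and $\gamma$ satisfies $J_{X,C}S^{\mathrm T}=\gamma H_G$, then $H^{M\text{-}M}_X(J^{M\text{-}M}_Z)^{\mathrm T}=0$, $H^{M\text{-}M}_Z(J^{M\text{-}M}_X)^{\mathrm T}=0$ and $J^{M\text{-}M}_X(J^{M\text{-}M}_Z)^{\mathrm T}=E_{k-q}$. (b) If the glue code is compatible with the memory via $S,T$, then $H^{M\text{-}B}_X(J^{M\text{-}B}_Z)^{\mathrm T}=0$, $H^{M\text{-}B}_Z(J^{M\text{-}B}_X)^{\mathrm T}=0$ and $J^{M\text{-}B}_X(J^{M\text{-}B}_Z)^{\mathrm T}=E_k$.
   Context: All vectors are row vectors over $\mathbb F_2$; $\mathrm{rs}A$ is the row space, $\ker A=\{x:Ax^{\mathrm T}=0\}$, $VM=\{vM:v\in V\}$, $E_m$ the identity. The memory is a CSS subsystem code specified by $H_X\in\mathbb F_2^{r_X\times n}$, $H_Z\in\mathbb F_2^{r_Z\times n}$, $J_X,J_Z\in\mathbb F_2^{k\times n}$, $F_X,F_Z\in\mathbb F_2^{k_g\times n}$ satisfying $\ker H_X=\mathrm{rs}H_Z\oplus\mathrm{rs}J_Z\oplus\mathrm{rs}F_Z$, $\ker H_Z=\mathrm{rs}H_X\oplus\mathrm{rs}J_X\oplus\mathrm{rs}F_X$, $J_XJ_Z^{\mathrm T}=E_k$, $F_XF_Z^{\mathrm T}=E_{k_g}$. Let $v_1,\dots,v_q\in\mathrm{rs}J_Z$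 be linearly independent (representing $\Sigma$), $J_{Z,A}$ the matrix with rows $v_1,\dots,v_q$; extend to a basis $v_1,\dots,v_k$ of $\mathrm{rs}J_Z$ and let $J_{Z,C}$ have rows $v_{q+1},\dots,v_k$. Let $\bar J_Z$ be the invertible $k\times k$ matrix with $\binom{J_{Z,A}}{J_{Z,C}}=\bar J_ZJ_Z$ and define $J_{X,A}\in\mathbb F_2^{q\times n}$, $J_{X,C}\in\mathbb F_2^{(k-q)\times n}$ by $\binom{J_{X,A}}{J_{X,C}}=(\bar J_Z^{-1})^{\mathrm T}J_X$. A glue code $H_G\in\mathbb F_2^{r_G\times n_G}$ is compatible via pasting matrices $S\in\mathbb F_2^{n_G\times n}$, $T\in\mathbb F_2^{r_X\times r_G}$ if $H_XS^{\mathrm T}=TH_G$; it is finely devised for $\Sigma$ if there exist $u_1,u_2,\dots\in\mathrm{rs}H_Z\oplus\mathrm{rs}F_Z$ with $\mathrm{span}(v_1,\dots,v_q,u_1,u_2,\dots)=(\ker H_G)S$. Measurement-sticker deformed code: coordinates are split into blocks $u_0\in\mathbb F_2^n$, $u_1,\dots,u_{d_R-1}\in\mathbb F_2^{n_G}$, $w_1,\dots,w_{d_R}\in\mathbb F_2^{r_G}$. $H^{M\text{-}M}_X$ has row-block $0$ equal to $H_X$ on $u_0$ and $T$ on $w_1$, and for $1\le j\le d_R-1$ row-block $j$ equal to $H_G$ on $u_j$, $E_{r_G}$ on $w_j$ and $E_{r_G}$ on $w_{j+1}$ (zero elsewhere). $H^{M\text{-}M}_Z$ has row-block $0$ equal to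 $H_Z$ on $u_0$, and for $1\le i\le d_R$ row-block $i$ equal to $S$ on $u_0$ (only if $i=1$), $E_{n_G}$ on $u_{i-1}$ (only if $i\ge2$), $E_{n_G}$ on $u_i$ (only if $i\le d_R-1$), and $H_G^{\mathrm T}$ on $w_i$. $J^{M\text{-}M}_X$ equals $J_{X,C}$ on $u_0$, $J_{X,C}S^{\mathrm T}$ on each of $u_1,\dots,u_{d_R-1}$, $0$ on $w_1,\dots,w_{d_R-1}$ and $\gamma$ on $w_{d_R}$; $J^{M\text{-}M}_Z$ equals $J_{Z,C}$ on $u_0$ and $0$ elsewhere. Branch-sticker deformed code: blocks $u_0\in\mathbb F_2^n$, $u_1,\dots,u_{d_R-1}\in\mathbb F_2^{n_G}$, $w_1,\dots,w_{d_R-1}\in\mathbb F_2^{r_G}$. $H^{M\text{-}B}_X$ has row-block $0$ equal to $H_X$ on $u_0$ and $T$ on $w_1$, and for $1\le j\le d_R-1$ row-block $j$ equal to $H_G$ on $u_j$, $E_{r_G}$ on $w_j$ and $E_{r_G}$ on $w_{j+1}$ (the latter only if $j\le d_R-2$). $H^{M\text{-}B}_Z$ has row-block $0$ equal to $H_Z$ on $u_0$, and for $1\le i\le d_R-1$ row-block $i$ equal to $S$ on $u_0$ (only if $i=1$), $E_{n_G}$ on $u_{i-1}$ (only if $i\ge2$), $E_{n_G}$ on $u_i$, and $H_G^{\mathrm T}$ on $w_i$. With $J'_X=\binom{J_{X,A}}{J_{X,C}}$, $J'_Z=\binom{J_{Z,A}}{J_{Z,C}}$: $J^{M\text{-}B}_X$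 equals $J'_X$ on $u_0$, $J'_XS^{\mathrm T}$ on each $u_j$ and $0$ on all $w_j$; $J^{M\text{-}B}_Z$ equals $J'_Z$ on $u_0$ and $0$ elsewhere. *)

(* Defs.v *)
From HB Require Import structures.
From mathcomp Require Import all_boot all_order all_algebra.
Set Implicit Arguments. Unset Strict Implicit. Unset Printing Implicit Defensive.
Import GRing.Theory.
Local Open Scope ring_scope.

(* ker A = { x : A x^T = 0 } as a row space: x *m A^T = 0 <-> (x <= kermx A^T) *)
Notation kerF A := (kermx (trmx A)).

Section Deformed.
Variable R : fieldType.
Variables (n rX rZ nG rG dR : nat).

(* ---- Measurement-sticker deformed code ----
   Column blocks: u_0 (size n) | u_1..u_{dR-1} (size nG each, 0-based j <-> u_{j+1})
                  | w_1..w_{dR} (size rG each, 0-based i <-> w_{i+1}). *)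

Definition HX_MM (HX : 'M[R]_(rX, n)) (T : 'M[R]_(rX, rG)) (HG : 'M[R]_(rG, nG))
  : 'M[R]_(rX + \sum_(j < dR.-1) rG, n + (\sum_(j < dR.-1) nG + \sum_(i < dR) rG)) :=
  col_mx
    (row_mx HX (row_mx 0
       (\mxrow_(i < dR) (if (i == 0 :> nat) then T else 0 : 'M[R]_(rX, rG)))))
    (\mxcol_(j < dR.-1) row_mx (0 : 'M[R]_(rG, n)) (row_mx
       (\mxrow_(j' < dR.-1) (if j' == j then HG else 0 : 'M[R]_(rG, nG)))
       (\mxrow_(i < dR) (if (i == j :> nat) || (i == j.+1 :> nat)
                         then 1%:M else 0 : 'M[R]_(rG, rG))))).

Definition HZ_MM (HZ : 'M[R]_(rZ, n)) (S : 'M[R]_(nG, n)) (HG : 'M[R]_(rG, nG))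
  : 'M[R]_(rZ + \sum_(i < dR) nG, n + (\sum_(j < dR.-1) nG + \sum_(i < dR) rG)) :=
  col_mx
    (row_mx HZ 0)
    (\mxcol_(i < dR) row_mx (if (i == 0 :> nat) then S else 0 : 'M[R]_(nG, n)) (row_mx
       (\mxrow_(j < dR.-1) (if (j.+1 == i :> nat) || (j == i :> nat)
                            then 1%:M else 0 : 'M[R]_(nG, nG)))
       (\mxrow_(i' < dR) (if i' == i then HG^T else 0 : 'M[R]_(nG, rG))))).

Definition JX_MM c (JXC : 'M[R]_(c, n)) (S : 'M[R]_(nG, n)) (gamma : 'M[R]_(c, rG))
  : 'M[R]_(c, n + (\sum_(j < dR.-1) nG + \sum_(i < dR) rG)) :=
  row_mx JXC (row_mx
    (\mxrow_(j < dR.-1) (JXC *m S^T))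
    (\mxrow_(i < dR) (if (i == dR.-1 :> nat) then gamma else 0 : 'M[R]_(c, rG)))).

Definition JZ_MM c (JZC : 'M[R]_(c, n))
  : 'M[R]_(c, n + (\sum_(j < dR.-1) nG + \sum_(i < dR) rG)) :=
  row_mx JZC 0.

(* ---- Branch-sticker deformed code ----
   Column blocks: u_0 | u_1..u_{dR-1} | w_1..w_{dR-1} (0-based as above). *)

Definition HX_MB (HX : 'M[R]_(rX, n)) (T : 'M[R]_(rX, rG)) (HG : 'M[R]_(rG, nG))
  : 'M[R]_(rX + \sum_(j < dR.-1) rG, n + (\sum_(j < dR.-1) nG + \sum_(i < dR.-1) rG)) :=
  col_mx
    (row_mx HX (row_mx 0
       (\mxrow_(i < dR.-1) (if (i == 0 :> nat) then T else 0 : 'M[R]_(rX, rG)))))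
    (\mxcol_(j < dR.-1) row_mx (0 : 'M[R]_(rG, n)) (row_mx
       (\mxrow_(j' < dR.-1) (if j' == j then HG else 0 : 'M[R]_(rG, nG)))
       (\mxrow_(i < dR.-1) (if (i == j :> nat) || (i == j.+1 :> nat)
                            then 1%:M else 0 : 'M[R]_(rG, rG))))).

Definition HZ_MB (HZ : 'M[R]_(rZ, n)) (S : 'M[R]_(nG, n)) (HG : 'M[R]_(rG, nG))
  : 'M[R]_(rZ + \sum_(i < dR.-1) nG, n + (\sum_(j < dR.-1) nG + \sum_(i < dR.-1) rG)) :=
  col_mx
    (row_mx HZ 0)
    (\mxcol_(i < dR.-1) row_mx (if (i == 0 :> nat) then S else 0 : 'M[R]_(nG, n)) (row_mx
       (\mxrow_(j < dR.-1) (if (j.+1 == i :> nat) || (j == i :> nat)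
                            then 1%:M else 0 : 'M[R]_(nG, nG)))
       (\mxrow_(i' < dR.-1) (if i' == i then HG^T else 0 : 'M[R]_(nG, rG))))).

Definition JX_MB k (JX' : 'M[R]_(k, n)) (S : 'M[R]_(nG, n))
  : 'M[R]_(k, n + (\sum_(j < dR.-1) nG + \sum_(i < dR.-1) rG)) :=
  row_mx JX' (row_mx (\mxrow_(j < dR.-1) (JX' *m S^T)) 0).

Definition JZ_MB k (JZ' : 'M[R]_(k, n))
  : 'M[R]_(k, n + (\sum_(j < dR.-1) nG + \sum_(i < dR.-1) rG)) :=
  row_mx JZ' 0.

End Deformed.

(* Main.v *)
Require Import Defs.
From HB Require Import structures.
From mathcomp Require Import all_boot all_order all_algebra.
Import GRing.Theory.
Local Open Scope ring_scope.

Lemma F2_dbl a b (M : 'M['F_2]_(a, b)) : M + M = 0.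
Proof. apply/matrixP=> i j; rewrite !mxE; case: (M i j) => [[|[|k]]] // H; apply/eqP; rewrite ?eqxx //. 
Qed.

Lemma sum_if_eq (V : nmodType) m k (A : V) :
  \sum_(j < m) (if (j:nat) == k then A else 0) = if (k < m)%N then A else 0.
Proof.
elim: m => [|m IH]; first by rewrite big_ord0 ltn0.
rewrite big_ord_recr /= IH ltnS.
by case: (ltngtP k m) => h; rewrite ?addr0 ?add0r.
Qed.

Lemma sum_if_eqS (V : nmodType) m k (A : V) :
  \sum_(j < m) (if (j.+1 == k)%N then A else 0) = if (0 < k <= m)%N then A else 0.
Proof.
case: k => [|k]; first by rewrite big1.
by rewrite (eq_bigr (fun j : 'I_m => if (j:nat) == k then A else 0)) // sum_if_eq.
Qed.

Lemma if_mul1 (R : pzRingType) a b (bb : bool) (X : 'M[R]_(a, b)) :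
  (if bb then 1%:M else 0) *m X = if bb then X else 0.
Proof. by case: bb; rewrite ?mul1mx ?mul0mx. Qed.

Lemma if_or (V : nmodType) (x y : bool) (A : V) : ~~ (x && y) ->
  (if x || y then A else 0) = (if x then A else 0) + (if y then A else 0).
Proof. by case: x; case: y => //= _; rewrite ?addr0 ?add0r. Qed.

Lemma sum_if_pred1 (V: nmodType) m (i:'I_m) (F : 'I_m -> V) :
  \sum_j (if j == i then F j else 0) = F i.
Proof. by rewrite -big_mkcond big_pred1_eq. Qed.

Lemma sum_band (R : pzRingType) a b m k (X : 'M[R]_(a,b)) :
  \sum_(j < m) ((if (j.+1 == k)%N || (j == k :> nat) then 1%:M else 0) *m X)
  = (if (0 < k <= m)%N then X else 0) + (if (k < m)%N then X else 0).
Proof.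
rewrite -sum_if_eqS -sum_if_eq -big_split; apply: eq_bigr => j _.
rewrite if_mul1 if_or //; case: (j.+1 == k) / eqP => // <-.
by rewrite (ltn_eqF (ltnSn j)).
Qed.

Lemma sum_blk (R : pzRingType) a b c m (i : 'I_m) (A : 'M[R]_(a,b)) (Y : 'I_m -> 'M[R]_(b, c)) :
  \sum_i' ((if i' == i then A else 0) *m Y i') = A *m Y i.
Proof.
rewrite -[RHS](@sum_if_pred1 _ _ i (fun i' => A *m Y i')); apply: eq_bigr => j _.
by case: eqP; rewrite ?mul0mx.
Qed.

Lemma char2_dbl (F : fieldType) (h2 : (2%:R : F) = 0) a b (M : 'M[F]_(a,b)) : M + M = 0.
Proof. by rewrite -mulr2n -scaler_nat h2 scale0r. Qed.

Lemma char2_eq (F : fieldType) (h2 : (2%:R : F) = 0) a b (M N : 'M[F]_(a,b)) : M = N -> M + N = 0.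
Proof. by move=> ->; apply: char2_dbl. Qed.

Lemma blk_b (F : fieldType) (h2 : (2%:R : F) = 0) m a b nn (i : 'I_m)
  (S : 'M[F]_(a, nn)) (Y : 'M[F]_(b, nn)) :
  (if (i:nat) == 0 then S else 0) *m Y^T +
  ((if (0 < i <= m)%N then (Y *m S^T)^T else 0) + (if (i < m)%N then (Y *m S^T)^T else 0)) = 0.
Proof.
rewrite trmx_mul trmxK; case: i => [[|i] hi] /=.
  by rewrite hi add0r; exact (char2_dbl F h2 _ _ (S *m Y^T)).
by rewrite hi (ltnW hi) mul0mx add0r; exact (char2_dbl F h2 _ _ (S *m Y^T)).
Qed.

Theorem proposition2
  (n rX rZ q c kg nG rG dR : nat)
  (HX : 'M['F_2]_(rX, n)) (HZ : 'M['F_2]_(rZ, n))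
  (JX JZ : 'M['F_2]_(q + c, n)) (FX FZ : 'M['F_2]_(kg, n))
  (hkerX : (kerF HX == HZ + JZ + FZ)%MS) (hdirX : mxdirect (HZ + JZ + FZ))
  (hkerZ : (kerF HZ == HX + JX + FX)%MS) (hdirZ : mxdirect (HX + JX + FX))
  (hJ : JX *m JZ^T = 1%:M) (hF : FX *m FZ^T = 1%:M)
  (JZA : 'M['F_2]_(q, n)) (JZC : 'M['F_2]_(c, n))
  (hJZA : row_free JZA) (hJZAsub : (JZA <= JZ)%MS)
  (hbasis_free : row_free (col_mx JZA JZC)) (hbasis_span : (col_mx JZA JZC == JZ)%MS)
  (Jbar : 'M['F_2]_(q + c)) (hJbar_unit : Jbar \in unitmx)
  (hJbar : col_mx JZA JZC = Jbar *m JZ)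
  (JXA : 'M['F_2]_(q, n)) (JXC : 'M['F_2]_(c, n))
  (hJXAC : col_mx JXA JXC = (invmx Jbar)^T *m JX)
  (HG : 'M['F_2]_(rG, nG)) (S : 'M['F_2]_(nG, n)) (T : 'M['F_2]_(rX, rG))
  (hcompat : HX *m S^T = T *m HG)
  (hdR : (2 <= dR)%N) :
  (forall gamma : 'M['F_2]_(c, rG),
     (exists (m : nat) (U : 'M['F_2]_(m, n)),
        (U <= HZ + FZ)%MS /\ (col_mx JZA U == kerF HG *m S)%MS) ->
     JXC *m S^T = gamma *m HG ->
     HX_MM dR HX T HG *m (JZ_MM nG rG dR JZC)^T = 0 /\
     HZ_MM dR HZ S HG *m (JX_MM dR JXC S gamma)^T = 0 /\
     JX_MM dR JXC S gamma *m (JZ_MM nG rG dR JZC)^T = 1%:M)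
  /\
  (HX_MB dR HX T HG *m (JZ_MB nG rG dR (col_mx JZA JZC))^T = 0 /\
   HZ_MB dR HZ S HG *m (JX_MB rG dR (col_mx JXA JXC) S)^T = 0 /\
   JX_MB rG dR (col_mx JXA JXC) S *m (JZ_MB nG rG dR (col_mx JZA JZC))^T = 1%:M).
Proof.
set JZ' := col_mx JZA JZC; set JX' := col_mx JXA JXC.
have hZX : JZ *m HX^T = 0.
  apply/sub_kermxP; case/andP: hkerX => _ h; apply: submx_trans h.
  exact: submx_trans (addsmxSr HZ JZ) (addsmxSl _ _).
have hXZ : JX *m HZ^T = 0.
  apply/sub_kermxP; case/andP: hkerZ => _ h; apply: submx_trans h.
  exact: submx_trans (addsmxSr HX JX) (addsmxSl _ _).
have hXZ' : JX' *m HZ^T = 0 by rewrite /JX' hJXAC -mulmxA hXZ mulmx0.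
have hZX' : JZ' *m HX^T = 0 by rewrite /JZ' hJbar -mulmxA hZX mulmx0.
have hJ' : JX' *m JZ'^T = 1%:M.
  rewrite /JX' /JZ' hJXAC hJbar trmx_mul -mulmxA (mulmxA JX) hJ mul1mx.
  by rewrite -trmx_mul mulmxV // trmx1.
have hXZC : JXC *m HZ^T = 0.
  by move: hXZ'; rewrite /JX' mul_col_mx -col_mx0 => /eq_col_mx [_ ->].
have hZXC : JZC *m HX^T = 0.
  by move: hZX'; rewrite /JZ' mul_col_mx -col_mx0 => /eq_col_mx [_ ->].
have hJC : JXC *m JZC^T = 1%:M.
  by move: hJ'; rewrite /JX' /JZ' tr_col_mx mul_col_row scalar_mx_block => /eq_block_mx [_ _ _ ->].
have hZXCt : HX *m JZC^T = 0 by rewrite -[HX]trmxK -trmx_mul hZXC trmx0.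
have hXZCt : HZ *m JXC^T = 0 by rewrite -[HZ]trmxK -trmx_mul hXZC trmx0.
case: dR hdR => [|[|d]] // _.
split.
  move=> gamma _ hg; split; last split.
  - rewrite /HX_MM /JZ_MM tr_row_mx trmx0 mul_col_mx !mul_row_col !mulmx0 !addr0 hZXCt mxcol_mul.
    rewrite [X in col_mx 0 X](_ : _ = 0) ?col_mx0 //.
    by rewrite -(mxcol0 (p_ := fun _ => rG)); apply: eq_mxcol => i; rewrite mul_row_col mul0mx mulmx0 addr0.
  - rewrite /HZ_MM /JX_MM !tr_row_mx mul_col_mx !mul_row_col mul0mx hXZCt add0r mxcol_mul.
    rewrite [X in col_mx 0 X](_ : _ = 0) ?col_mx0 //.
    rewrite -(mxcol0 (p_ := fun _ => nG)); apply: eq_mxcol => i.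
    rewrite !tr_mxrow !mul_row_col !mul_mxrow_mxcol.
    rewrite sum_band sum_blk.
    have hX : (JXC *m S^T)^T = S *m JXC^T by rewrite trmx_mul trmxK.
    have hG : HG^T *m gamma^T = S *m JXC^T by rewrite -trmx_mul -hg trmx_mul trmxK.
    have e : forall b, HG^T *m (if b then gamma else 0)^T = if b then HG^T *m gamma^T else 0.
      by case; rewrite ?trmx0 ?mulmx0.
    rewrite e hX hG; case: i => [[|i] hi] /=.
      by rewrite addr0 (add0r (S *m JXC^T)) F2_dbl.
    rewrite mul0mx (add0r (_ + _)) ltnS in hi *; rewrite leq_eqVlt in hi.
    case/orP: hi => [/eqP ->|hi].
      by rewrite ltnn eqxx ltnSn (addr0 (S *m JXC^T)) F2_dbl.
    by rewrite hi (ltn_eqF hi) (ltnW hi) (addr0 (S *m JXC^T + _)) F2_dbl.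
  - by rewrite /JX_MM /JZ_MM tr_row_mx trmx0 mul_row_col mulmx0 addr0.
split; last split.
- rewrite /HX_MB /JZ_MB tr_row_mx trmx0 mul_col_mx !mul_row_col !mulmx0 !addr0 mxcol_mul.
  rewrite (_ : HX *m JZ'^T = 0); last by rewrite -[HX]trmxK -trmx_mul hZX' trmx0.
  rewrite [X in col_mx 0 X](_ : _ = 0) ?col_mx0 //.
  by rewrite -(mxcol0 (p_ := fun _ => rG)); apply: eq_mxcol => i; rewrite mul_row_col mul0mx mulmx0 addr0.
- rewrite /HZ_MB /JX_MB !tr_row_mx trmx0 mul_col_mx !mul_row_col mul0mx.
  rewrite (_ : HZ *m JX'^T = 0); last by rewrite -[HZ]trmxK -trmx_mul hXZ' trmx0.
  rewrite (addr0 (0 : 'M_(rZ, _))) mxcol_mul.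
  rewrite [X in col_mx 0 X](_ : _ = 0) ?col_mx0 //.
  rewrite -(mxcol0 (p_ := fun _ => nG)); apply: eq_mxcol => i.
  rewrite !tr_mxrow !mul_row_col mulmx0 addr0 mul_mxrow_mxcol sum_band.
  by apply: blk_b; apply/eqP.
- by rewrite /JX_MB /JZ_MB tr_row_mx trmx0 mul_row_col mulmx0 addr0.
Qed.
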